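(* Let $m=2k$ with $k$ a positive integer, let $n$ be a positive integer, and let $\{B_1,\dots,B_{k(n-1)+1}\}$ be a basis for $\Gamma_{k,n}$. For each $i$, let $\hat B_i$ be the $m\times n$ matrix $\begin{pmatrix} B_i\\ B_i^\pi\end{pmatrix}$ (the $k\times n$ block $B_i$ stacked on top of the $k\times n$ block $B_i^\pi$). Then $\{\hat B_1,\dots,\hat B_{k(n-1)+1}\}$ is a basis for $\Gamma^\pi_{m,n}$.
   Context: A real matrix is stochastic if its entries are nonnegative and each row sums to $1$. $\Gamma_{k,n}$ is the set of $k\times n$ stochastic matrices. For $A=(a_{i,j})\in M_{p,n}$, $A^\pi$ is the $p\times n$ matrix with $(A^\pi)_{i,j}=a_{p+1-i,n+1-j}$; $A$ is centrosymmetric if $A=A^\pi$. $\Gamma^\pi_{m,n}$ is the set of $m\times n$ centrosymmetric stochastic matrices; it is an affine set of dimension $k(n-1)$. A basis for such a set $\Gamma$ of affine dimension $d$ means a set of $d+1$ linearly independent elements of $\Gamma$ whose linear span contains $\Gamma$. *)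

(* Defs.v *)
From mathcomp Require Import all_boot all_order all_algebra.
Set Implicit Arguments. Unset Strict Implicit. Unset Printing Implicit Defensive.
Import Order.TTheory GRing.Theory Num.Theory.
Local Open Scope ring_scope.

Definition stochastic (R : realFieldType) (p n : nat) (A : 'M[R]_(p, n)) : Prop :=
  (forall i j, 0 <= A i j) /\ (forall i, \sum_(j < n) A i j = 1).

Definition Gamma (R : realFieldType) (p n : nat) : 'M[R]_(p, n) -> Prop :=
  fun A => stochastic A.

Definition mxpi (R : realFieldType) (p n : nat) (A : 'M[R]_(p, n)) : 'M[R]_(p, n) :=
  \matrix_(i < p, j < n) A (rev_ord i) (rev_ord j).

Definition centrosymmetric (R : realFieldType) (p n : nat) (A : 'M[R]_(p, n)) : Prop :=
  A = mxpi A.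

Definition GammaPi (R : realFieldType) (p n : nat) : 'M[R]_(p, n) -> Prop :=
  fun A => stochastic A /\ centrosymmetric A.

(* A family B_0..B_{N-1} is a basis of the set S (of affine dimension N-1):
   its members lie in S, are linearly independent, and their linear span
   contains S. *)
Definition affine_basis (R : realFieldType) (p n N : nat)
    (S : 'M[R]_(p, n) -> Prop) (B : 'I_N -> 'M[R]_(p, n)) : Prop :=
  [/\ forall i, S (B i),
      (forall c : 'I_N -> R, \sum_(i < N) c i *: B i = 0 -> forall i, c i = 0)
    & forall A, S A -> exists c : 'I_N -> R, A = \sum_(i < N) c i *: B i].

(* Main.v *)
Require Import Defs.
From mathcomp Require Import all_boot all_order all_algebra.
From mathcomp Require Import zify.
Import GRing.Theory Num.Theory.
Local Open Scope ring_scope.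

Lemma sum_entry (R : realFieldType) (p n N : nat) (c : 'I_N -> R) (M : 'I_N -> 'M[R]_(p, n)) i j :
  (\sum_(l < N) c l *: M l) i j = \sum_(l < N) c l * M l i j.
Proof. rewrite summxE; apply eq_bigr => l _; by rewrite mxE. Qed.

Lemma rev_lshift (k : nat) (a : 'I_k) : rev_ord (lshift k a) = rshift k (rev_ord a).
Proof. apply/val_inj => /=. have := ltn_ord a. lia. Qed.

Lemma rev_rshift (k : nat) (a : 'I_k) : rev_ord (rshift k a) = lshift k (rev_ord a).
Proof. apply/val_inj => /=. have := ltn_ord a. lia. Qed.

Lemma mxpi_stoch (R : realFieldType) (p n : nat) (A : 'M[R]_(p, n)) :
  stochastic A -> stochastic (mxpi A).
Proof.
case=> H1 H2; split=> [i j|i]; rewrite ?mxE //.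
rewrite -(H2 (rev_ord i)) (reindex_inj rev_ord_inj) /=.
by apply eq_bigr => j _; rewrite mxE rev_ordK.
Qed.

Lemma col_stoch (R : realFieldType) (k n : nat) (X Y : 'M[R]_(k, n)) :
  stochastic X -> stochastic Y -> stochastic (col_mx X Y).
Proof.
case=> X1 X2 [Y1 Y2]; split=> [i j|i]; rewrite -[i]splitK; case: (split i) => a /=.
- by rewrite col_mxEu.
- by rewrite col_mxEd.
- by rewrite -(X2 a); apply eq_bigr => j _; rewrite col_mxEu.
- by rewrite -(Y2 a); apply eq_bigr => j _; rewrite col_mxEd.
Qed.

Lemma col_centro (R : realFieldType) (k n : nat) (X : 'M[R]_(k, n)) :
  centrosymmetric (col_mx X (mxpi X)).
Proof.
rewrite /centrosymmetric; apply/matrixP => i j; rewrite [RHS]mxE.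
rewrite -[i]splitK; case: (split i) => a /=.
- by rewrite rev_lshift col_mxEu col_mxEd mxE !rev_ordK.
- by rewrite rev_rshift col_mxEu col_mxEd mxE.
Qed.

Theorem mainTheorem9 (R : realFieldType) (k n : nat) (hk : (0 < k)%N) (hn : (0 < n)%N)
    (B : 'I_(k * (n - 1) + 1) -> 'M[R]_(k, n)) :
  affine_basis (@Gamma R k n) B ->
  affine_basis (@GammaPi R (k + k) n) (fun i => col_mx (B i) (mxpi (B i))).
Proof.
case=> Hin Hind Hspan; split.
- move=> i; split; last exact: col_centro.
  apply: col_stoch; first exact: Hin.
  apply: mxpi_stoch; exact: Hin.
- move=> c Hc; apply: Hind; apply/matrixP => i j.
  have := congr1 (fun M : 'M[R]_(k + k, n) => M (lshift k i) j) Hc.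
  rewrite /= sum_entry mxE => H.
  rewrite sum_entry; apply: etrans (etrans _ H) _; last by rewrite mxE.
  by apply eq_bigr => l _; rewrite col_mxEu.
- move=> A [HA HC].
  have Hu : Gamma (usubmx A).
    case: HA => H1 H2; split=> [i j|i]; first by rewrite mxE.
    by rewrite -(H2 (lshift k i)); apply eq_bigr => j _; rewrite mxE.
  have [c Hc] := Hspan _ Hu; exists c.
  apply/matrixP => i j; rewrite sum_entry.
  rewrite -[i]splitK; case: (split i) => a /=.
  + have := congr1 (fun M : 'M[R]_(k, n) => M a j) Hc.
    rewrite /= mxE sum_entry => ->.
    by apply eq_bigr => l _; rewrite col_mxEu.
  + rewrite HC mxE rev_rshift.
    have := congr1 (fun M : 'M[R]_(k, n) => M (rev_ord a) (rev_ord j)) Hc.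
    rewrite /= mxE sum_entry => ->.
    by apply eq_bigr => l _; rewrite col_mxEd mxE.
Qed.
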